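(* Let $B$ be a Boolean algebra, let $U,V,W\subset B^n$ be Boolean domains over $B$ with $U\cup V\subset W$, and let $F:U\to V$ be a Boolean isomorphism. Then there is a Boolean isomorphism $F':W\to W$ whose restriction to $U$ is $F$.
   Context: $B$ is a fixed Boolean algebra, with operations $\vee,\wedge$, complement, and symmetric difference $a\triangle b=(a\setminus b)\vee(b\setminus a)$. A Boolean function $f:B^n\to B$ is a function given by a polynomial expression built from the variables, elements of $B$, and the Boolean operations $\vee,\wedge$ and complement (e.g. $f(x_1,x_2)=(x_1\vee x_2)\triangle a$ with $a\in B$ fixed). A Boolean domain is a set $V=\{x\in B^n: f(x)=0\}$ for some Boolean function $f:B^n\to B$. If $U\subset B^n$ and $V\subset B^m$ are Boolean domains, a map $F:U\to V$ is a Boolean transformation if there are Boolean functions $F_1,\dots,F_m:B^n\to B$ with $F(x)=(F_1(x),\dots,F_m(x))$ for all $x\in U$. A Boolean isomorphism is a bijective Boolean transformation. *)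

(* Defs.v *)
(* A Boolean algebra is a complemented distributive lattice
   with top and bottom: mathcomp's ctbDistrLatticeType. *)
From HB Require Import structures.
From mathcomp Require Import all_boot all_order.
Set Implicit Arguments. Unset Strict Implicit. Unset Printing Implicit Defensive.
Import Order.Theory.
Local Open Scope order_scope.

Inductive bterm (T : Type) (n : nat) : Type :=
| BVar : 'I_n -> bterm T n
| BConst : T -> bterm T n
| BJoin : bterm T n -> bterm T n -> bterm T n
| BMeet : bterm T n -> bterm T n -> bterm T n
| BCompl : bterm T n -> bterm T n.

Fixpoint beval d (B : ctbDistrLatticeType d) n (t : bterm B n) (x : 'I_n -> B) : B :=
  match t with
  | BVar i => x i
  | BConst a => a
  | BJoin t1 t2 => beval t1 x `|` beval t2 x
  | BMeet t1 t2 => beval t1 x `&` beval t2 x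
  | BCompl t1 => ~` beval t1 x
  end.

Definition boolean_function d (B : ctbDistrLatticeType d) n (f : ('I_n -> B) -> B) : Prop :=
  exists t : bterm B n, forall x, f x = beval t x.

Definition boolean_domain d (B : ctbDistrLatticeType d) n (U : ('I_n -> B) -> Prop) : Prop :=
  exists f, boolean_function f /\ forall x, U x <-> f x = \bot.

(* F : U -> V (represented by a total function on B^n) is a Boolean
   transformation: it maps U into V and agrees on U with a tuple of Boolean
   functions. *)
Definition boolean_transformation d (B : ctbDistrLatticeType d) n m
  (U : ('I_n -> B) -> Prop) (V : ('I_m -> B) -> Prop) (F : ('I_n -> B) -> ('I_m -> B)) : Prop :=
  (forall x, U x -> V (F x)) /\
  exists Fs : 'I_m -> (('I_n -> B) -> B),
    (forall i, boolean_function (Fs i)) /\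
    forall x, U x -> forall i, F x i = Fs i x.

Definition boolean_isomorphism d (B : ctbDistrLatticeType d) n m
  (U : ('I_n -> B) -> Prop) (V : ('I_m -> B) -> Prop) (F : ('I_n -> B) -> ('I_m -> B)) : Prop :=
  boolean_transformation U V F /\
  (forall x y, U x -> U y -> F x = F y -> x = y) /\
  (forall y, V y -> exists x, U x /\ F x = y).

(* Main.v *)
Require Import Defs.
From HB Require Import structures.
From mathcomp Require Import all_boot all_order all_fingroup.
From Stdlib Require Import Classical ClassicalEpsilon FunctionalExtensionality.
Set Implicit Arguments. Unset Strict Implicit. Unset Printing Implicit Defensive.
Import Order.Theory.
Local Open Scope order_scope.

Section Basics.
Variable d : Order.disp_t.
Variable B : ctbDistrLatticeType d.
Implicit Types (x y z m a : B).

HB.instance Definition _ := Monoid.isAddLaw.Build B (@Order.meet d B) (@Order.join d B) (@meetUl d B) (@meetUr d B).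

Definition lit (b : bool) z := if b then z else ~` z.
Definition bv (b : bool) : B := if b then \top else \bot.
Definition mt (I : finType) (y : I -> B) (s : {ffun I -> bool}) := \meet_(i : I) lit (s i) (y i).

Lemma meet_bv m b : m `&` bv b = if b then m else \bot.
Proof. by case: b; rewrite /= ?meetx1 ?meetx0. Qed.

Lemma bv_inj m b1 b2 : m != \bot -> m `&` bv b1 = m `&` bv b2 -> b1 = b2.
Proof.
move=> /eqP hm; rewrite !meet_bv; case: b1; case: b2 => //= h; by case: hm.
Qed.

Lemma mt_cover (I : finType) (y : I -> B) : \join_(s : {ffun I -> bool}) mt y s = \top.
Proof.
rewrite /mt -(bigA_distr_bigA (fun i b => lit b (y i))).
apply: big1 => i _; by rewrite big_bool /= joinxC.
Qed.

Lemma mt_le (I : finType) (y : I -> B) s i : mt y s <= lit (s i) (y i).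
Proof. exact: meets_inf. Qed.

Lemma mt_var (I : finType) (y : I -> B) s i m : m <= mt y s -> m `&` y i = m `&` bv (s i).
Proof.
move=> hm; have := le_trans hm (mt_le y s i); rewrite meet_bv /lit.
case: (s i) => h; first by apply/meet_idPl.
apply/eqP; rewrite disj_leC //.
Qed.

Lemma mt_disj (I : finType) (y : I -> B) s t : s != t -> mt y s `&` mt y t = \bot.
Proof.
move=> hst; have [i hi] : exists i, s i != t i.
  apply/existsP; apply: contraR hst => /existsPn hn; apply/eqP/ffunP => i.
  exact/eqP/negPn/hn.
apply/eqP; rewrite -lex0; apply: le_trans (leI2 (mt_le y s i) (mt_le y t i)) _.
by rewrite /lit; move: hi; case: (s i); case: (t i) => //= _; rewrite ?meetxC ?meetCx.
Qed.

Lemma meet_bigjoin (X : Type) (r : seq X) (P : pred X) (F : X -> B) m :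
  m `&` \join_(i <- r | P i) F i = \join_(i <- r | P i) (m `&` F i).
Proof. exact: big_distrr. Qed.

Lemma pieces (K : finType) (p : K -> B) z1 z2 :
  \join_(k : K) p k = \top -> (forall k, p k `&` z1 = p k `&` z2) -> z1 = z2.
Proof.
move=> hc h; rewrite -(meet1x z1) -(meet1x z2) -hc.
rewrite !big_distrl /=; apply: eq_bigr => k _.
exact: h.
Qed.

Lemma meetC_compl m p : m `&` ~` p = m `&` ~` (m `&` p).
Proof. by rewrite complI meetUr meetxC join0x. Qed.

Lemma meetIdis m p q : m `&` (p `&` q) = (m `&` p) `&` (m `&` q).
Proof. by rewrite meetACA meetxx. Qed.

Lemma beval_loc n (t : bterm B n) m (x y : 'I_n -> B) :
  (forall i, m `&` x i = m `&` y i) -> m `&` beval t x = m `&` beval t y.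
Proof.
move=> h; elim: t => [i|c|t1 IH1 t2 IH2|t1 IH1 t2 IH2|t1 IH1] //=.
- by rewrite !meetUr IH1 IH2.
- by rewrite (meetIdis m (beval t1 x)) (meetIdis m (beval t1 y)) IH1 IH2.
- by rewrite meetC_compl IH1 -meetC_compl.
Qed.

Lemma split2 a z1 z2 : a `&` z1 = a `&` z2 -> ~` a `&` z1 = ~` a `&` z2 -> z1 = z2.
Proof.
move=> h1 h2; rewrite -(meet1x z1) -(meet1x z2) -(joinxC a) !meetUl h1 h2 //.
Qed.

Definition mix n a (x y : 'I_n -> B) : 'I_n -> B := fun i => (a `&` x i) `|` (~` a `&` y i).

Lemma mix_l n a (x y : 'I_n -> B) i : a `&` mix a x y i = a `&` x i.
Proof. by rewrite /mix meetUr meetA meetxx meetA meetxC meet0x joinx0. Qed.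

Lemma mix_r n a (x y : 'I_n -> B) i : ~` a `&` mix a x y i = ~` a `&` y i.
Proof. by rewrite /mix meetUr meetA meetCx meet0x meetA meetxx join0x. Qed.


End Basics.
Section BF.
Variable d : Order.disp_t.
Variable B : ctbDistrLatticeType d.
Variable n : nat.
Implicit Types (f g : ('I_n -> B) -> B).

Lemma bf_ext f g : boolean_function f -> (forall x, f x = g x) -> boolean_function g.
Proof. by move=> [t h] e; exists t => x; rewrite -e h. Qed.
Lemma bf_var i : boolean_function (fun x : 'I_n -> B => x i).
Proof. by exists (BVar B i). Qed.
Lemma bf_const (c : B) : boolean_function (fun x : 'I_n -> B => c).
Proof. by exists (BConst n c). Qed.
Lemma bf_join f g : boolean_function f -> boolean_function g -> boolean_function (fun x => f x `|` g x).
Proof. by move=> [t1 h1] [t2 h2]; exists (BJoin t1 t2) => x /=; rewrite h1 h2. Qed.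
Lemma bf_meet f g : boolean_function f -> boolean_function g -> boolean_function (fun x => f x `&` g x).
Proof. by move=> [t1 h1] [t2 h2]; exists (BMeet t1 t2) => x /=; rewrite h1 h2. Qed.
Lemma bf_compl f : boolean_function f -> boolean_function (fun x => ~` f x).
Proof. by move=> [t1 h1]; exists (BCompl t1) => x /=; rewrite h1. Qed.
Lemma bf_bigjoin (X : Type) (s : seq X) (F : X -> ('I_n -> B) -> B) :
  (forall k, boolean_function (F k)) -> boolean_function (fun x => \join_(k <- s) F k x).
Proof.
move=> h; elim: s => [|k s IH].
  apply: (bf_ext (bf_const (\bot : B))) => x. by rewrite big_nil.
by apply: (bf_ext (bf_join (h k) IH)) => x; rewrite big_cons.
Qed.
Lemma bf_bigmeet (X : Type) (s : seq X) (F : X -> ('I_n -> B) -> B) :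
  (forall k, boolean_function (F k)) -> boolean_function (fun x => \meet_(k <- s) F k x).
Proof.
move=> h; elim: s => [|k s IH].
  by apply: (bf_ext (bf_const (\top : B))) => x; rewrite big_nil.
by apply: (bf_ext (bf_meet (h k) IH)) => x; rewrite big_cons.
Qed.
End BF.
Lemma perm_ext (T : finType) (Ua Va Wa : {set T}) (f : T -> T) :
  Ua \subset Wa -> Va \subset Wa -> {in Ua &, injective f} -> f @: Ua = Va ->
  exists p : {perm T}, (forall x, x \in Ua -> p x = f x) /\
    (forall x, x \in Wa -> p x \in Wa) /\ (forall x, x \in Wa -> (p^-1)%g x \in Wa).
Proof.
move=> sUW sVW finj fUV.
set A := Wa :\: Ua; set C := Wa :\: Va.
have cardAC : #|A| = #|C|.
  rewrite /A /C !cardsD (setIidPr sUW) (setIidPr sVW) -fUV card_in_imset //.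
have sAC : size (enum A) = size (enum C) by rewrite -!cardE.
pose h x := nth x (enum C) (index x (enum A)).
have hA x : x \in A -> h x \in C.
  move=> xA; rewrite -mem_enum /h mem_nth // -sAC index_mem mem_enum //.
have hinj : {in A &, injective h}.
  move=> x y xA yA; rewrite /h => e.
  have ix : (index x (enum A) < size (enum C))%N by rewrite -sAC index_mem mem_enum.
  have iy : (index y (enum A) < size (enum C))%N by rewrite -sAC index_mem mem_enum.
  have : index x (enum A) = index y (enum A).
    apply/eqP; rewrite -(nth_uniq x ix iy (enum_uniq _)).
    by rewrite (set_nth_default y x iy) e.
  have xe : x \in enum A by rewrite mem_enum.
  by move=> ei; rewrite -(nth_index x xe) ei nth_index // mem_enum.
pose g x := if x \in Ua then f x else if x \in Wa then h x else x.
have fV x : x \in Ua -> f x \in Va by move=> xU; rewrite -fUV; apply: imset_f.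
have hAV z : z \in A -> h z \notin Va.
  by move=> zA; have := hA z zA; rewrite inE => /andP[].
have hAW z : z \in A -> h z \in Wa.
  by move=> zA; have := hA z zA; rewrite inE => /andP[].
have ginj : injective g.
  move=> x y; rewrite /g.
  case xU: (x \in Ua); case yU: (y \in Ua).
  - exact: finj.
  - case yW: (y \in Wa) => e.
    + have yA : y \in A by rewrite inE yU yW.
      by move: (hAV y yA); rewrite -e fV.
    + by move: (fV _ xU); rewrite e => /(subsetP sVW); rewrite yW.
  - case xW: (x \in Wa) => e.
    + have xA : x \in A by rewrite inE xU xW.
      by move: (hAV x xA); rewrite e fV.
    + by move: (fV _ yU); rewrite -e => /(subsetP sVW); rewrite xW.
  - case xW: (x \in Wa); case yW: (y \in Wa) => e.
    + by apply: hinj; rewrite // inE ?xU ?yU ?xW ?yW.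
    + have xA : x \in A by rewrite inE xU xW.
      by move: (hAW x xA); rewrite e yW.
    + have yA : y \in A by rewrite inE yU yW.
      by move: (hAW y yA); rewrite -e xW.
    + exact: e.
exists (perm ginj); split; first by move=> x xU; rewrite permE /g xU.
have gW x : x \in Wa -> g x \in Wa.
  move=> xW; rewrite /g; case: ifP => xU; first exact: subsetP sVW _ (fV _ xU).
  by rewrite xW; apply: hAW; rewrite inE xU xW.
split; first by move=> x xW; rewrite permE; apply: gW.
move=> x xW; apply: contraTT xW => yW.
have e := permKV (perm ginj) x; rewrite permE /g in e.
have yU : (perm ginj)^-1%g x \notin Ua by apply: contra yW; apply: subsetP.
by rewrite (negbTE yU) (negbTE yW) in e; rewrite -e.
Qed.
Section Main.
Variable d : Order.disp_t.
Variable B : ctbDistrLatticeType d.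
Variable n : nat.
Variables tU tV tW : bterm B n.
Variable tF : 'I_n -> bterm B n.

Definition inU (x : 'I_n -> B) := beval tU x = \bot.
Definition inV (x : 'I_n -> B) := beval tV x = \bot.
Definition inW (x : 'I_n -> B) := beval tW x = \bot.
Definition FF (x : 'I_n -> B) : 'I_n -> B := fun j => beval (tF j) x.

Local Notation T := {ffun 'I_n -> bool}.
Definition hat (e : T) : 'I_n -> B := fun i => bv B (e i).
Local Notation cidx := (T + T + T + T * 'I_n)%type.
Definition cc (k : cidx) : B :=
  match k with
  | inl (inl (inl e)) => beval tU (hat e)
  | inl (inl (inr e)) => beval tV (hat e)
  | inl (inr e) => beval tW (hat e)
  | inr (e, j) => beval (tF j) (hat e)
  end.
Local Notation Sg := {ffun cidx -> bool}.
Definition cell (s : Sg) := mt cc s.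
Definition Us (s : Sg) : {set T} := [set e | ~~ s (inl (inl (inl e)))].
Definition Vs (s : Sg) : {set T} := [set e | ~~ s (inl (inl (inr e)))].
Definition Ws (s : Sg) : {set T} := [set e | ~~ s (inl (inr e))].
Definition fs (s : Sg) (e : T) : T := [ffun j => s (inr (e, j))].

Lemma L_hat (m : B) x e t : m <= mt x e -> m `&` beval t x = m `&` beval t (hat e).
Proof. move=> hm; apply: beval_loc => i; exact: mt_var. Qed.

Lemma L_c (m : B) s k : m <= cell s -> m `&` cc k = m `&` bv B (s k).
Proof. exact: mt_var. Qed.

Lemma sigma_false (m : B) s k : m <= cell s -> m != \bot -> m `&` cc k = \bot -> s k = false.
Proof.
move=> hm hm0 h; apply: (bv_inj hm0); rewrite -(L_c k hm) h /= meetx0 //.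
Qed.

Lemma mix_loc (a : B) e (y0 : 'I_n -> B) t : a `&` beval t (mix a (hat e) y0) = a `&` beval t (hat e).
Proof. apply: beval_loc => i; exact: mix_l. Qed.

Lemma mix_zero (a : B) e (y0 : 'I_n -> B) t :
  beval t y0 = \bot -> a `&` beval t (hat e) = \bot -> beval t (mix a (hat e) y0) = \bot.
Proof.
move=> h0 h1; apply: (split2 (a := a)).
  by rewrite mix_loc h1 meetx0.
by rewrite (beval_loc t (m := ~` a) (y := y0)) ?h0 ?meetx0 // => i; exact: mix_r.
Qed.

Lemma hat_inj (m : B) e1 e2 : m != \bot -> (forall i, m `&` hat e1 i = m `&` hat e2 i) -> e1 = e2.
Proof. move=> hm h; apply/ffunP => i; exact: (bv_inj hm (h i)). Qed.

Hypothesis HUW : forall x, inU x -> inW x.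
Hypothesis HVW : forall x, inV x -> inW x.
Hypothesis HFV : forall x, inU x -> inV (FF x).
Hypothesis Hinj : forall x y, inU x -> inU y -> FF x = FF y -> x = y.
Hypothesis Hsurj : forall y, inV y -> exists x, inU x /\ FF x = y.
Variable u0 : 'I_n -> B.
Hypothesis Hu0 : inU u0.

Lemma cell_props s : cell s != \bot ->
  [/\ Us s \subset Ws s, Vs s \subset Ws s, {in Us s &, injective (fs s)} & fs s @: Us s = Vs s].
Proof.
move=> ha; set a := cell s.
have ale : a <= cell s by [].
have cfalse k : s k = false -> a `&` cc k = \bot.
  by move=> hk; rewrite (L_c k ale) hk meetx0.
have inUmix e : e \in Us s -> inU (mix a (hat e) u0).
  rewrite inE => /negbTE hk; apply: mix_zero => //; exact: (cfalse _ hk).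
have sUW : Us s \subset Ws s.
  apply/subsetP => e eU; rewrite inE; apply/negbT.
  apply: (sigma_false ale ha); rewrite /= -(mix_loc a e u0); rewrite (HUW (inUmix e eU)) meetx0 //.
have v0 : inV (FF u0) by apply: HFV.
have sVW : Vs s \subset Ws s.
  apply/subsetP => e; rewrite inE => /negbTE hk; rewrite inE; apply/negbT.
  have hV : inV (mix a (hat e) (FF u0)) by apply: mix_zero => //; exact: (cfalse _ hk).
  apply: (sigma_false ale ha); rewrite /= -(mix_loc a e (FF u0)); rewrite (HVW hV) meetx0 //.
have FFmix e j : a `&` FF (mix a (hat e) u0) j = a `&` hat (fs s e) j.
  by rewrite /FF mix_loc -/(cc (inr (e, j))) (L_c _ ale) /hat ffunE.
have FFmixr e j : ~` a `&` FF (mix a (hat e) u0) j = ~` a `&` FF u0 j.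
  by apply: beval_loc => i; exact: mix_r.
have finj : {in Us s &, injective (fs s)}.
  move=> e1 e2 e1U e2U he.
  have hx : mix a (hat e1) u0 = mix a (hat e2) u0.
    apply: Hinj; [exact: inUmix | exact: inUmix |].
    apply: functional_extensionality => j; apply: (split2 (a := a)).
      by rewrite !FFmix he.
    by rewrite !FFmixr.
  apply: (hat_inj ha) => i; by rewrite -(mix_l a (hat e1) u0) -(mix_l a (hat e2) u0) hx.
split => //.
apply/eqP; rewrite eqEsubset; apply/andP; split.
  apply/subsetP => _ /imsetP[e eU ->]; rewrite inE; apply/negbT.
  apply: (sigma_false ale ha).
  have hV := HFV (inUmix e eU).
  rewrite /= -[RHS](meetx0 a) -hV; apply: beval_loc => j; rewrite FFmix //.
apply/subsetP => v; rewrite inE => /negbTE hk.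
have hV : inV (mix a (hat v) (FF u0)) by apply: mix_zero => //; exact: (cfalse _ hk).
have [x [xU ex]] := Hsurj hV.
have [e he] : exists e, a `&` mt x e != \bot.
  apply: NNPP => hn.
  move/eqP: ha; apply; rewrite -[LHS]meetx1 -(mt_cover x) meet_bigjoin /=.
  apply: big1 => e _; apply/eqP; apply: NNPP => h; apply: hn; exists e; exact/negP.
set m := a `&` mt x e in he.
have ma : m <= a by exact: leIl.
have mx : m <= mt x e by exact: leIr.
have mcell : m <= cell s by exact: le_trans ma ale.
apply/imsetP; exists e.
  rewrite inE; apply/negbT; apply: (sigma_false mcell he).
  by rewrite /= -(L_hat tU mx) xU meetx0.
apply: (hat_inj he) => j.
rewrite /hat ffunE -(L_c _ mcell) /= -(L_hat _ mx) -/(FF x j) ex.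
rewrite -(meet_idPl ma) -!meetA mix_l //.
Qed.


Lemma exists_pi : exists pi : Sg -> {perm T}, forall s, cell s != \bot ->
  [/\ (forall e, e \in Us s -> pi s e = fs s e),
      (forall e, e \in Ws s -> pi s e \in Ws s) &
      (forall e, e \in Ws s -> ((pi s)^-1)%g e \in Ws s)].
Proof.
have H : forall s, exists p : {perm T}, cell s != \bot ->
  [/\ (forall e, e \in Us s -> p e = fs s e),
      (forall e, e \in Ws s -> p e \in Ws s) &
      (forall e, e \in Ws s -> (p^-1)%g e \in Ws s)].
  move=> s; case: (boolP (cell s != \bot)) => h; last by exists 1%g.
  have [h1 h2 h3 h4] := cell_props h.
  have [p [p1 [p2 p3]]] := perm_ext h1 h2 h3 h4.
  by exists p => _; split.
exists (fun s => proj1_sig (constructive_indefinite_description _ (H s))).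
move=> s; exact: (proj2_sig (constructive_indefinite_description _ (H s))).
Qed.

Definition G (rho : Sg -> T -> T) (x : 'I_n -> B) : 'I_n -> B :=
  fun j => \join_(s : Sg) \join_(e : T) (cell s `&` mt x e `&` bv B (rho s e j)).

Lemma le_bot3 (m p q r : B) : m <= p -> p `&` q = \bot -> m `&` (q `&` r) = \bot.
Proof.
move=> hm hpq; apply/eqP; rewrite -lex0 -hpq; apply: leI2 => //; exact: leIl.
Qed.

Lemma G_piece rho x s e (m : B) j : m <= cell s `&` mt x e -> m `&` G rho x j = m `&` bv B (rho s e j).
Proof.
move=> hm.
have hs : m <= cell s by apply: le_trans hm _; exact: leIl.
have he : m <= mt x e by apply: le_trans hm _; exact: leIr.
rewrite /G meet_bigjoin (bigD1 s) //= meet_bigjoin (bigD1 e) //=.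
rewrite [X in _ `|` X]big1 ?joinx0; last first.
  move=> s' hs'; rewrite meet_bigjoin; apply: big1 => e' _.
  rewrite -meetA; apply: (le_bot3 _ hs); apply: mt_disj; by rewrite eq_sym.
rewrite [X in _ `|` X]big1 ?joinx0; last first.
  move=> e' he'; rewrite -meetA meetCA; apply: (le_bot3 _ he); apply: mt_disj; by rewrite eq_sym.
by rewrite meetA (meet_idPl hm).
Qed.

Lemma pieces2 (x : 'I_n -> B) (z1 z2 : B) :
  (forall (s : Sg) (e : T), cell s `&` mt x e `&` z1 = cell s `&` mt x e `&` z2) -> z1 = z2.
Proof.
move=> h; apply: (pieces (mt_cover cc)) => s.
apply: (pieces (mt_cover x)) => e.
by rewrite !meetA ![mt x e `&` cell s]meetC -/(cell s).
Qed.

Lemma mt_ge (m : B) (x : 'I_n -> B) (e : T) : (forall i, m `&` x i = m `&` bv B (e i)) -> m <= mt x e.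
Proof.
move=> h; apply/meetsP => i _; rewrite /lit; have := h i; rewrite meet_bv.
case: (e i) => hi; first by apply/meet_idPl.
by rewrite -disj_leC hi.
Qed.

Lemma cell_nz s (m : B) : m <= cell s -> m != \bot -> cell s != \bot.
Proof. by move=> hm; apply: contraNN => /eqP h; rewrite -lex0 -h. Qed.

Variable pi : Sg -> {perm T}.
Hypothesis Hpi : forall s, cell s != \bot ->
  [/\ (forall e, e \in Us s -> pi s e = fs s e),
      (forall e, e \in Ws s -> pi s e \in Ws s) &
      (forall e, e \in Ws s -> ((pi s)^-1)%g e \in Ws s)].

Definition Fp := G (fun s e => pi s e).

Lemma Fp_piece x s e (m : B) j : m <= cell s `&` mt x e -> m `&` Fp x j = m `&` bv B (pi s e j).
Proof. exact: G_piece. Qed.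

Lemma Fp_agree x : inU x -> Fp x = FF x.
Proof.
move=> xU; apply: functional_extensionality => j.
apply: (pieces2 (x := x)) => s e.
set m := cell s `&` mt x e.
have [->|hm] := eqVneq m \bot; first by rewrite !meet0x.
have ms : m <= cell s by exact: leIl.
have mx : m <= mt x e by exact: leIr.
have [p1 _ _] := Hpi (cell_nz ms hm).
have eU : e \in Us s.
  rewrite inE; apply/negbT; apply: (sigma_false ms hm).
  by rewrite /= -(L_hat tU mx) xU meetx0.
rewrite (Fp_piece _ (le_refl m)) p1 // ffunE.
by rewrite -(L_c _ ms) /= -(L_hat _ mx).
Qed.

Lemma Fp_W x : inW x -> inW (Fp x).
Proof.
move=> xW; apply: (pieces2 (x := x)) => s e.
set m := cell s `&` mt x e.
have [->|hm] := eqVneq m \bot; first by rewrite !meet0x.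
have ms : m <= cell s by exact: leIl.
have mx : m <= mt x e by exact: leIr.
have [_ p2 _] := Hpi (cell_nz ms hm).
have eW : e \in Ws s.
  rewrite inE; apply/negbT; apply: (sigma_false ms hm).
  by rewrite /= -(L_hat tW mx) xW meetx0.
have := p2 e eW; rewrite inE => /negbTE hk.
rewrite meetx0 (beval_loc tW (m := m) (y := hat (pi s e))); last first.
  by move=> i; rewrite (Fp_piece _ (le_refl m)).
by rewrite -/(cc (inl (inr (pi s e)))) (L_c _ ms) hk meetx0.
Qed.

Lemma Fp_inj x y : Fp x = Fp y -> x = y.
Proof.
move=> exy; apply: functional_extensionality => i.
apply: (pieces2 (x := x)) => s e.
apply: (pieces (mt_cover y)) => g.
rewrite !meetA.
set m := mt y g `&` cell s `&` mt x e.
have [->|hm] := eqVneq m \bot; first by rewrite !meet0x.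
have ms : m <= cell s by apply: le_trans (leIl _ _) (leIr _ _).
have mx : m <= mt x e by exact: leIr.
have my : m <= mt y g by apply: le_trans (leIl _ _) (leIl _ _).
have mxe : m <= cell s `&` mt x e by rewrite lexI ms mx.
have myg : m <= cell s `&` mt y g by rewrite lexI ms my.
have epg : pi s e = pi s g.
  apply/ffunP => j; apply: (bv_inj hm).
  by rewrite -(Fp_piece _ mxe) -(Fp_piece _ myg) exy.
have := perm_inj epg => eg.
by rewrite (mt_var _ mx) (mt_var _ my) eg.
Qed.

Lemma Fp_surj y : inW y -> exists x, inW x /\ Fp x = y.
Proof.
move=> yW; set rho := fun s e => ((pi s)^-1)%g e.
exists (G rho y).
have key : forall s g, cell s `&` mt y g != \bot ->
   [/\ cell s `&` mt y g <= mt (G rho y) (rho s g), rho s g \in Ws s & g \in Ws s].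
  move=> s g hm; set m := cell s `&` mt y g in hm *.
  have ms : m <= cell s by exact: leIl.
  have my : m <= mt y g by exact: leIr.
  have [_ _ p3] := Hpi (cell_nz ms hm).
  have gW : g \in Ws s.
    rewrite inE; apply/negbT; apply: (sigma_false ms hm).
    by rewrite /= -(L_hat tW my) yW meetx0.
  split => //; last exact: p3.
  by apply: mt_ge => i; rewrite (G_piece _ _ (le_refl m)).
split.
  apply: (pieces2 (x := y)) => s g.
  set m := cell s `&` mt y g.
  have [->|hm] := eqVneq m \bot; first by rewrite !meet0x.
  have ms : m <= cell s by exact: leIl.
  have [k1 k2 k3] := key s g hm.
  move: k2; rewrite inE => /negbTE hk.
  by rewrite meetx0 (L_hat _ k1) -/(cc (inl (inr (rho s g)))) (L_c _ ms) hk meetx0.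
apply: functional_extensionality => j.
apply: (pieces2 (x := y)) => s g.
set m := cell s `&` mt y g.
have [->|hm] := eqVneq m \bot; first by rewrite !meet0x.
have ms : m <= cell s by exact: leIl.
have my : m <= mt y g by exact: leIr.
have [k1 k2 k3] := key s g hm.
have mxe : m <= cell s `&` mt (G rho y) (rho s g) by rewrite lexI ms k1.
rewrite (Fp_piece _ mxe) /rho permKV.
by rewrite (mt_var _ my).
Qed.

Lemma Fp_bf j : boolean_function (fun x => Fp x j).
Proof.
rewrite /Fp /G; apply: bf_bigjoin => s; apply: bf_bigjoin => e.
apply: bf_meet; last exact: bf_const.
apply: bf_meet; first exact: bf_const.
rewrite /mt; apply: bf_bigmeet => i; rewrite /lit; case: (e i).
  exact: bf_var.
apply: bf_compl; exact: bf_var.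
Qed.

End Main.

Theorem theorem1 (d : Order.disp_t) (B : ctbDistrLatticeType d) (n : nat)
  (U V W : ('I_n -> B) -> Prop) :
  boolean_domain U -> boolean_domain V -> boolean_domain W ->
  (forall x, U x \/ V x -> W x) ->
  forall F : ('I_n -> B) -> ('I_n -> B),
  boolean_isomorphism U V F ->
  exists F' : ('I_n -> B) -> ('I_n -> B),
    boolean_isomorphism W W F' /\ (forall x, U x -> F' x = F x).
Proof.
move=> [fU [[tU htU] hU]] [fV [[tV htV] hV]] [fW [[tW htW] hW]] hUVW F.
move=> [[FUV [Fs [hFs hFeq]]] [Finj Fsurj]].
have eU x : U x <-> inU tU x by rewrite /inU -htU; exact: hU.
have eV x : V x <-> inV tV x by rewrite /inV -htV; exact: hV.
have eW x : W x <-> inW tW x by rewrite /inW -htW; exact: hW.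
case: (classic (exists u0, U u0)) => [[u0 Hu0]|hne]; last first.
  exists id; split; last by move=> x Ux; exfalso; apply: hne; exists x.
  split; first split => //.
    exists (fun j x => x j); split => // j; exact: bf_var.
  by split => // y Wy; exists y.
have [tF htF] : exists tF : 'I_n -> bterm B n, forall j x, Fs j x = beval (tF j) x.
  exists (fun j => proj1_sig (constructive_indefinite_description _ (hFs j))).
  move=> j x; exact: (proj2_sig (constructive_indefinite_description _ (hFs j)) x).
have eF x : U x -> F x = FF tF x.
  by move=> Ux; apply: functional_extensionality => j; rewrite hFeq // htF.
have HUW x : inU tU x -> inW tW x by move=> /eU Ux; apply/eW; apply: hUVW; left.
have HVW x : inV tV x -> inW tW x by move=> /eV Vx; apply/eW; apply: hUVW; right.
have HFV x : inU tU x -> inV tV (FF tF x).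
  by move=> /eU Ux; rewrite -eF //; apply/eV; apply: FUV.
have Hinj x y : inU tU x -> inU tU y -> FF tF x = FF tF y -> x = y.
  move=> /eU Ux /eU Uy; rewrite -!eF //; exact: Finj.
have Hsurj y : inV tV y -> exists x, inU tU x /\ FF tF x = y.
  move=> /eV Vy; have [x [Ux <-]] := Fsurj y Vy; exists x; split; [exact/eU | by rewrite eF].
have Hu0' : inU tU u0 by apply/eU.
have [pi Hpi] := exists_pi HUW HVW HFV Hinj Hsurj Hu0'.
exists (Fp tU tV tW tF pi); split.
  split; first split.
  - move=> x /eW Wx; apply/eW; exact: Fp_W.
  - exists (fun j x => Fp tU tV tW tF pi x j); split => // j; exact: Fp_bf.
  split; first by move=> x y _ _; exact: Fp_inj.
  move=> y /eW Wy; have [x [Wx ex]] := Fp_surj Hpi Wy; exists x; split; [exact/eW | exact: ex].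
move=> x Ux; rewrite eF //; apply: (Fp_agree Hpi); exact/eU.
Qed.
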